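(* Let $1\le m\le n$ and let $h:[0,1]^{n-m+1}\rightarrow\mathbb{R}$ be any function. Define $g:[0,1]^n\rightarrow\mathbb{R}$ by $$g(w_1,\dots,w_n) = h\big(\max\{w_1,\dots,w_m\},\,w_{m+1},\dots,w_n\big).$$ Suppose that for each $i\in\{1,\dots,m\}$ the partial derivative $\frac{\partial g}{\partial w_i}(t\mathbf{1})$ exists for almost every $t\in[0,1]$ and $t\mapsto \frac{\partial g}{\partial w_i}(t\mathbf{1})$ is integrable on $[0,1]$. Then the integrated-gradients attributions with baseline $\mathbf{0}$ of the features $1,\dots,m$ are all equal, i.e. $$\int_0^1 \frac{\partial g}{\partial w_i}(t\mathbf{1})\,dt = \int_0^1 \frac{\partial g}{\partial w_j}(t\mathbf{1})\,dt \quad\text{for all } i,j\in\{1,\dots,m\}.$$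
   Context: $\mathbf{1}\in\mathbb{R}^n$ denotes the all-ones vector. For a function $g:[0,1]^n\to\mathbb{R}$, the integrated-gradients attribution of feature $i$ with baseline $\mathbf{0}$ (input $\mathbf{1}$) is $\int_0^1 \frac{\partial g}{\partial w_i}(t\mathbf{1})\,dt$. Features $1,\dots,m$ are called redundant because $g$ depends on them only through their maximum. *)

(* Defs.v *)
From HB Require Import structures.
From mathcomp Require Import all_boot all_order all_algebra.
From mathcomp Require Import all_classical all_reals all_analysis.
Set Implicit Arguments. Unset Strict Implicit. Unset Printing Implicit Defensive.
Import Order.TTheory GRing.Theory Num.Theory.
Import numFieldNormedType.Exports.
Local Open Scope ring_scope.

(* j-th coordinate (0-based) of w, as a total function of j : nat
   (0 when j >= n; never used out of range in the statement). *)
Definition coord_at (R : realType) (n : nat) (w : 'rV[R]_n) (j : nat) : R :=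
  if @insub _ (fun k => (k < n)%N) 'I_n j is Some i then w 0 i else 0.

(* max{w_1, ..., w_m} (0-based: coordinates 0..m-1); for m >= 1 the seed
   w_1 of the fold is itself one of the maximised values. *)
Definition max_first (R : realType) (n m : nat) (w : 'rV[R]_n) : R :=
  \big[Num.max/coord_at w 0]_(j < m) coord_at w j.

Definition redundant_g (R : realType) (n m : nat)
    (h : 'rV[R]_(n - m + 1) -> R) (w : 'rV[R]_n) : R :=
  h (\row_(k < n - m + 1)
       (if k == 0 :> nat then max_first m w else coord_at w (k + m - 1))).

Definition diag_pt (R : realType) (n : nat) (t : R) : 'rV[R]_n := const_mx t.

Definition basis_vec (R : realType) (n : nat) (i : 'I_n) : 'rV[R]_n :=
  delta_mx 0 i.

(* integrated-gradients attribution of feature i, baseline 0, input 1 *)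
Definition ig_attr (R : realType) (n : nat) (g : 'rV[R]_n -> R) (i : 'I_n) : R :=
  Rintegral (@lebesgue_measure R) `[0, 1]%classic
    (fun t => 'D_(@basis_vec R n i) g (@diag_pt R n t)).

(* Main.v *)
Require Import Defs.
From HB Require Import structures.
From mathcomp Require Import all_boot all_order all_algebra.
From mathcomp Require Import all_classical all_reals all_analysis.
From mathcomp Require Import lra zify.
Import Order.TTheory GRing.Theory Num.Theory.
Import numFieldNormedType.Exports.
Local Open Scope ring_scope.
Local Open Scope classical_set_scope.

Lemma coord_pt (R : realType) (n : nat) (i : 'I_n) (t s : R) (j : nat) :
  (j < n)%N ->
  coord_at (s *: (@basis_vec R n i) + (@diag_pt R n t)) j = s * (j == i)%:R + t.
Proof.
move=> jn; rewrite /coord_at insubT /= !mxE /=.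
by [].
Qed.

Lemma big_le_in (R : realType) (r : seq nat) (x : R) (F : nat -> R) j0 :
  j0 \in r -> F j0 <= \big[Num.max/x]_(j <- r) F j.
Proof.
elim: r => // a r IH; rewrite inE big_cons => /orP [/eqP ->|/IH H].
  by rewrite le_max lexx.
by rewrite le_max H orbT.
Qed.

Lemma max_first_val (R : realType) (n m : nat) (i k : 'I_n) (t s : R) :
  (i < m)%N -> (k < m)%N -> k != i -> (m <= n)%N ->
  (@max_first R n m) (s *: (@basis_vec R n i) + (@diag_pt R n t)) = Num.max t (s + t).
Proof.
move=> im km ki mn; rewrite /max_first.
have cv : forall j, (j < m)%N ->
   coord_at (s *: (@basis_vec R n i) + (@diag_pt R n t)) j = s * (j == i)%:R + t.
  by move=> j jm; apply: coord_pt; apply: leq_trans mn.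
apply/le_anti/andP; split.
  apply: (big_ind (fun y => y <= Num.max t (s + t))).
  - rewrite cv; last by apply: leq_trans km.
    by case: (0 == i :> nat); rewrite ?mulr1 ?mulr0 ?add0r le_max lexx ?orbT.
  - by move=> a b Ha Hb; rewrite ge_max Ha Hb.
  - move=> j _; rewrite cv //.
    by case: (j == i :> nat); rewrite ?mulr1 ?mulr0 ?add0r le_max lexx ?orbT.
rewrite -(big_map (@nat_of_ord m) xpredT).
set w := s *: (@basis_vec R n i) + (@diag_pt R n t).
have Hk : (k : nat) \in [seq nat_of_ord x | x <- index_enum 'I_m].
  by apply/mapP; exists (Ordinal km) => //; exact: mem_index_enum.
have Hi : (i : nat) \in [seq nat_of_ord x | x <- index_enum 'I_m].
  by apply/mapP; exists (Ordinal im) => //; exact: mem_index_enum.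
have /negbTE kin : (k : nat) != i by [].
rewrite ge_max; apply/andP; split.
  by apply: (le_trans _ (@big_le_in R _ (coord_at w 0) (coord_at w) _ Hk)); rewrite cv // kin mulr0 add0r.
by apply: (le_trans _ (@big_le_in R _ (coord_at w 0) (coord_at w) _ Hi)); rewrite cv // eqxx mulr1.
Qed.

Lemma g_sym (R : realType) (m n : nat) (hmn : (m <= n)%N)
  (h : 'rV[R]_(n - m + 1) -> R) (i j : 'I_n) (t s : R) :
  (i < m)%N -> (j < m)%N ->
  (@redundant_g R n m h) (s *: (@basis_vec R n i) + (@diag_pt R n t)) =
  (@redundant_g R n m h) (s *: (@basis_vec R n j) + (@diag_pt R n t)).
Proof.
move=> im jm.
have [->|ij] := eqVneq i j; first by [].
rewrite /redundant_g; congr h; apply/rowP => k; rewrite !mxE.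
case: eqP => k0.
  rewrite (@max_first_val R n m i j t s im jm _ hmn); last by rewrite eq_sym.
  by rewrite (@max_first_val R n m j i t s jm im ij hmn).
have kn : ((k + m - 1) < n)%N.
  have := ltn_ord k; lia.
rewrite (@coord_pt R n i t s _ kn) (@coord_pt R n j t s _ kn).
have -> : ((k + m - 1)%N == i :> nat) = false by apply/eqP; lia.
have -> : ((k + m - 1)%N == j :> nat) = false by apply/eqP; lia.
by [].
Qed.

Lemma derive_eq (K : numFieldType) (V W : normedModType K) (f : V -> W) (a v w : V) :
  (forall s : K, f (s *: v + a) = f (s *: w + a)) -> 'D_v f a = 'D_w f a.
Proof.
move=> E; rewrite /derive.
have -> : (fun s : K => s^-1 *: ((f \o shift a) (s *: v) - f a)) =
          (fun s : K => s^-1 *: ((f \o shift a) (s *: w) - f a)).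
  by apply: funext => s /=; rewrite E.
by [].
Qed.

Theorem lemma2 (R : realType) (m n : nat) (hm1 : (1 <= m)%N) (hmn : (m <= n)%N)
  (h : 'rV[R]_(n - m + 1) -> R) :
  (forall i : 'I_n, (i < m)%N ->
     {ae @lebesgue_measure R, forall t : R, `[0, 1]%classic t ->
        derivable (@redundant_g R n m h) (@diag_pt R n t) (@basis_vec R n i)}
     /\ (@lebesgue_measure R).-integrable `[0, 1]%classic
          (fun t => ('D_(@basis_vec R n i) (@redundant_g R n m h) (@diag_pt R n t))%:E)) ->
  forall i j : 'I_n, (i < m)%N -> (j < m)%N ->
    ig_attr (@redundant_g R n m h) i = ig_attr (@redundant_g R n m h) j.
Proof.
move=> _ i j im jm; rewrite /ig_attr.
congr Rintegral; apply: funext => t.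
apply: derive_eq => s.
exact: (@g_sym R m n hmn h i j t s im jm).
Qed.
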